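(* In the binary random graph affiliation mixture model with $Q\ge 2$ groups, for any fixed and known values $\pi_q\in(0,1)$, $1\le q\le Q$, the parameters $\alpha,\beta$ are identifiable from the joint distribution of $K_3$: if $(\alpha,\beta)$ and $(\alpha',\beta')$ together with the same $\boldsymbol\pi$ induce the same law of $K_3$, then $(\alpha,\beta)=(\alpha',\beta')$.
   Context: Random graph mixture model: nodes have i.i.d. latent groups $Z_i\in\{1,\dots,Q\}$ with $\pi_q=\mathbb P(Z_i=q)\in(0,1)$, $\sum_q\pi_q=1$; edge variables $X_{ij}$ ($i<j$) are conditionally independent given all $Z$'s, with law of $X_{ij}$ depending only on $(Z_i,Z_j)$. Binary affiliation model: $X_{ij}\in\{0,1\}$ with $\mathbb P(X_{ij}=1\mid Z_i=q,Z_j=l)=\alpha$ if $q=l$ and $=\beta$ if $q\ne l$. $K_n$ denotes the collection of the $\binom n2$ edge variables among a set of $n$ nodes. *)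

(* Defs.v *)
(* Probabilities live in an arbitrary real closed field R
   (e.g. the real numbers); the model only involves finite sums/products. *)
From HB Require Import structures.
From mathcomp Require Import all_boot all_order all_algebra.
Set Implicit Arguments. Unset Strict Implicit. Unset Printing Implicit Defensive.
Import Order.TTheory GRing.Theory Num.Theory.
Local Open Scope ring_scope.

Definition affil_conn (R : rcfType) (Q : nat) (alpha beta : R) (q l : 'I_Q) : R :=
  if q == l then alpha else beta.

Definition bern (R : rcfType) (p : R) (b : bool) : R :=
  if b then p else 1 - p.

Definition proportions (R : rcfType) (Q : nat) (pi : 'I_Q -> R) : Prop :=
  (forall q, 0 < pi q < 1) /\ \sum_(q < Q) pi q = 1.

(* Joint law of K_3 = (X_12, X_13, X_23) on {0,1}^3 in the binary affiliation
   mixture model, obtained by summing over the i.i.d. latent groups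
   Z_1, Z_2, Z_3 with conditionally independent edges. *)
Definition affil_K3_law (R : rcfType) (Q : nat) (pi : 'I_Q -> R) (alpha beta : R)
    (x12 x13 x23 : bool) : R :=
  \sum_(z1 < Q) \sum_(z2 < Q) \sum_(z3 < Q)
     pi z1 * pi z2 * pi z3
     * bern (affil_conn alpha beta z1 z2) x12
     * bern (affil_conn alpha beta z1 z3) x13
     * bern (affil_conn alpha beta z2 z3) x23.

(* Main.v *)
Require Import Defs.
From HB Require Import structures.
From mathcomp Require Import all_boot all_order all_algebra.
From Stdlib Require Import Ring.
Import Order.TTheory GRing.Theory Num.Theory.
Local Open Scope ring_scope.

Section Main.
Variable R : rcfType.
Definition radd (x y : R) : R := x + y.
Definition rmul (x y : R) : R := x * y.
Definition ropp (x : R) : R := - x.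
Definition rsub (x y : R) : R := x - y.
Definition r0 : R := 0.
Definition r1 : R := 1.
Lemma RT : @ring_theory (Num.RealClosedField.sort R) r0 r1 radd rmul rsub ropp eq.
Proof. rewrite /radd/rmul/rsub/ropp/r0/r1.
split=> //; [exact: add0r|exact: addrC|exact: addrA|exact: mul1r|exact: mulrC|exact: mulrA|exact: mulrDl|exact: subrr]. Qed.
Add Ring Rring : RT.
Lemma addE (x y : R) : x + y = radd x y. Proof. by []. Qed.
Lemma mulE (x y : R) : x * y = rmul x y. Proof. by []. Qed.
Lemma oppE (x : R) : - x = ropp x. Proof. by []. Qed.
Lemma zeroE : 0 = r0 :> R. Proof. by []. Qed.
Lemma oneE : 1 = r1 :> R. Proof. by []. Qed.
Ltac rring := rewrite ?mulr1n ?mulr0n ?addE ?mulE ?oppE ?zeroE ?oneE; match goal with |- ?x = ?y => change (@eq (Num.RealClosedField.sort R) x y) end; ring.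

Variables (Q : nat) (pi : 'I_Q -> R).
Hypothesis hs : \sum_(q < Q) pi q = 1.

Definition e (q l : 'I_Q) : R := (q == l)%:R.
Lemma e_sym q l : e q l = e l q. Proof. by rewrite /e eq_sym. Qed.
Lemma eqq q : e q q = 1. Proof. by rewrite /e eqxx. Qed.
Lemma sum_e q (F : 'I_Q -> R) : \sum_l e q l * F l = F q.
Proof.
rewrite (bigD1 q) //= eqq mul1r big1 ?addr0 // => l hl.
by rewrite /e eq_sym (negbTE hl) mul0r.
Qed.

Definition sa := \sum_l pi l * pi l.
Definition sb := \sum_l pi l * pi l * pi l.

Definition c (be dl : R) q l := be + dl * e q l.

Lemma connE al be q l : affil_conn al be q l = c be (al - be) q l.
Proof.
rewrite /affil_conn /c /e; case: eqP => _ /=; rring.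
Qed.

Lemma G1 be dl q : \sum_l pi l * c be dl q l = be + dl * pi q.
Proof.
rewrite (eq_bigr (fun l => be * pi l + dl * (e q l * pi l))); last first.
  by move=> l _; rewrite /c; rring.
rewrite big_split /= -!mulr_sumr hs sum_e; rring.
Qed.

Lemma G2 be dl q r : \sum_l pi l * c be dl q l * c be dl r l
  = be*be + be*dl*(pi q + pi r) + dl*dl*(pi q * e r q).
Proof.
rewrite (eq_bigr (fun l => be*be * pi l + be*dl*(e q l * pi l) + be*dl*(e r l * pi l)
    + dl*dl*(e q l * (pi l * e r l)))); last first.
  by move=> l _; rewrite /c; rring.
rewrite !big_split /= -!mulr_sumr hs !sum_e; rring.
Qed.


Definition S3 (f : 'I_Q -> 'I_Q -> 'I_Q -> R) : R :=
  \sum_(z1 < Q) \sum_(z2 < Q) \sum_(z3 < Q) f z1 z2 z3.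

Lemma S3add f g : S3 f + S3 g = S3 (fun a b d => f a b d + g a b d).
Proof.
rewrite /S3 -big_split; apply: eq_bigr => z1 _.
rewrite -big_split; apply: eq_bigr => z2 _.
by rewrite -big_split.
Qed.

Lemma S3eq f g : (forall a b d, f a b d = g a b d) -> S3 f = S3 g.
Proof.
move=> h; rewrite /S3; apply: eq_bigr => z1 _; apply: eq_bigr => z2 _.
by apply: eq_bigr => z3 _.
Qed.

Lemma lawE al be x12 x13 x23 : affil_K3_law pi al be x12 x13 x23 =
  S3 (fun z1 z2 z3 => pi z1 * pi z2 * pi z3
     * bern (c be (al - be) z1 z2) x12
     * bern (c be (al - be) z1 z3) x13
     * bern (c be (al - be) z2 z3) x23).
Proof.
rewrite /affil_K3_law /S3; apply: eq_bigr => z1 _; apply: eq_bigr => z2 _.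
by apply: eq_bigr => z3 _; rewrite !connE.
Qed.

Lemma M1 be dl : S3 (fun z1 z2 z3 => pi z1 * pi z2 * pi z3 * c be dl z1 z2)
  = be + dl * sa.
Proof.
rewrite /S3.
transitivity (\sum_(z1 < Q) pi z1 * (be + dl * pi z1)).
  apply: eq_bigr => z1 _.
  rewrite (eq_bigr (fun z2 => pi z1 * (pi z2 * c be dl z1 z2))); last first.
    move=> z2 _.
    rewrite (eq_bigr (fun z3 => (pi z1 * pi z2 * c be dl z1 z2) * pi z3)); last first.
      by move=> z3 _; rring.
    by rewrite -mulr_sumr hs; rring.
  by rewrite -mulr_sumr G1.
rewrite (eq_bigr (fun z1 => be * pi z1 + dl * (pi z1 * pi z1))); last first.
  by move=> z1 _; rring.
by rewrite big_split /= -!mulr_sumr hs -/sa; rring.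
Qed.

Lemma M2 be dl :
  S3 (fun z1 z2 z3 => pi z1 * pi z2 * pi z3 * c be dl z1 z2 * c be dl z1 z3)
  = be*be + (be*dl+be*dl)*sa + dl*dl*sb.
Proof.
rewrite /S3.
transitivity (\sum_(z1 < Q) pi z1 * (be + dl * pi z1) * (be + dl * pi z1)).
  apply: eq_bigr => z1 _.
  rewrite (eq_bigr (fun z2 => pi z1 * (pi z2 * c be dl z1 z2)
                   * \sum_(z3 < Q) pi z3 * c be dl z1 z3)); last first.
    move=> z2 _; rewrite mulr_sumr; apply: eq_bigr => z3 _; rring.
  by rewrite -big_distrl /= -mulr_sumr !G1.
rewrite (eq_bigr (fun z1 => be * be * pi z1 + (be*dl+be*dl) * (pi z1 * pi z1)
                    + dl * dl * (pi z1 * pi z1 * pi z1))); last first.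
  by move=> z1 _; rring.
by rewrite !big_split /= -!mulr_sumr hs -/sa -/sb; rring.
Qed.

Lemma M3 be dl :
  S3 (fun z1 z2 z3 => pi z1 * pi z2 * pi z3 * c be dl z1 z2 * c be dl z1 z3
                      * c be dl z2 z3)
  = be*be*be + (be*be*dl+be*be*dl+be*be*dl)*sa
    + (be*dl*dl+be*dl*dl+be*dl*dl+dl*dl*dl)*sb.
Proof.
rewrite /S3.
transitivity (\sum_(q < Q)
   ((be*be*be + be*be*dl*sa) * pi q + (be*be*dl + be*be*dl) * (pi q * pi q)
    + (be*dl*dl+be*dl*dl+be*dl*dl+dl*dl*dl) * (pi q * pi q * pi q))).
  apply: eq_bigr => q _.
  transitivity (\sum_(l < Q) pi q * pi l * c be dl q l *
      (be*be + be*dl*(pi q + pi l) + dl*dl*(pi q * e l q))).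
    apply: eq_bigr => l _.
    rewrite -G2 mulr_sumr; apply: eq_bigr => z3 _; rring.
  pose X := be*be + be*dl*pi q.
  rewrite (eq_bigr (fun l => (pi q * be * X) * pi l + (pi q*be*(be*dl)) * (pi l * pi l)
     + e q l * (pi q * pi l * (be*(dl*dl*pi q) + dl*X + dl*(be*dl)*pi l
                               + dl*(dl*dl*pi q)*e q l)))); last first.
    by move=> l _; rewrite /c /X e_sym; rring.
  rewrite !big_split /= -!mulr_sumr hs -/sa sum_e eqq /X; rring.
rewrite !big_split /= -!mulr_sumr hs -/sa -/sb; rring.
Qed.


Lemma L1 al be : affil_K3_law pi al be true true true + affil_K3_law pi al be true true false
  + (affil_K3_law pi al be true false true + affil_K3_law pi al be true false false)
  = be + (al - be) * sa.
Proof.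
rewrite !lawE !S3add -M1; apply: S3eq => z1 z2 z3; rewrite /bern /=; rring.
Qed.

Lemma L2 al be : affil_K3_law pi al be true true true + affil_K3_law pi al be true true false
  = be*be + (be*(al - be)+be*(al - be))*sa + (al - be)*(al - be)*sb.
Proof.
rewrite !lawE !S3add -M2; apply: S3eq => z1 z2 z3; rewrite /bern /=; rring.
Qed.

Lemma L3 al be : affil_K3_law pi al be true true true
  = be*be*be + (be*be*(al - be)+be*be*(al - be)+be*be*(al - be))*sa
    + (be*(al - be)*(al - be)+be*(al - be)*(al - be)+be*(al - be)*(al - be)
       +(al - be)*(al - be)*(al - be))*sb.
Proof.
rewrite !lawE -M3; apply: S3eq => z1 z2 z3; rewrite /bern /=; rring.
Qed.

Definition w := sb - (sa+sa+sa)*sb + (sa*sa*sa + sa*sa*sa).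

Lemma key be dl :
  let F1 := be + dl * sa in
  let F2 := be*be + (be*dl+be*dl)*sa + dl*dl*sb in
  let F3 := be*be*be + (be*be*dl+be*be*dl+be*be*dl)*sa
    + (be*dl*dl+be*dl*dl+be*dl*dl+dl*dl*dl)*sb in
  F3 - F1*F1*F1 - (F1+F1+F1)*(F2 - F1*F1) = dl*dl*dl * w.
Proof. rewrite /w /=; rring. Qed.

Lemma cube_inj (x y : R) : x*x*x = y*y*y -> x = y.
Proof.
move=> h.
have e0 : (x - y) * (x*x + x*y + y*y) = x*x*x - y*y*y by rring.
rewrite h subrr in e0.
move/eqP: e0; rewrite mulf_eq0 => /orP[/eqP/subr0_eq //|/eqP hs0].
have sq : forall z : R, 0 <= z * z by move=> z; rewrite -expr2 sqr_ge0.
have e1 : (x+x+y)*(x+x+y) + (y*y + (y*y+y*y)) = 0.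
  have -> : (x+x+y)*(x+x+y) + (y*y + (y*y+y*y))
          = (x*x + x*y + y*y) + (x*x + x*y + y*y) + (x*x + x*y + y*y) + (x*x + x*y + y*y)
    by rring.
  by rewrite hs0 !addr0.
move/eqP: e1; rewrite paddr_eq0 ?addr_ge0 // => /andP[_].
rewrite paddr_eq0 ?addr_ge0 // => /andP[/eqP hy _].
have yz : y = 0 by move/eqP: hy; rewrite mulf_eq0 orbb => /eqP.
move: hs0; rewrite yz mulr0 mul0r !addr0 => /eqP hxx.
by move: hxx; rewrite mulf_eq0 orbb => /eqP.
Qed.

Lemma wpos : (0 < Q)%N -> (forall q, 0 < pi q < 1) -> 0 < w.
Proof.
move=> hQ hp.
pose i0 : 'I_Q := Ordinal hQ.
case: (arg_maxP pi (erefl true : xpredT i0)) => m _ hm.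
set M := pi m.
have hpos : forall i, 0 < pi i by move=> i; case/andP: (hp i).
have hM : 0 < M by apply: hpos.
have hMa : M * M <= sa.
  rewrite /sa (bigD1 m) //= lerDl; apply: sumr_ge0 => i _.
  by apply: mulr_ge0; apply: ltW.
have ha0 : 0 < sa := lt_le_trans (mulr_gt0 hM hM) hMa.
have ha1 : sa < 1.
  rewrite -hs /sa; apply: ltr_sum.
    by apply/hasP; exists i0; rewrite // mem_index_enum.
  move=> i _; case/andP: (hp i) => h0 h1.
  by rewrite -[X in _ < X]mulr1 ltr_pM2l.
have hb0 : 0 <= sb.
  by apply: sumr_ge0 => i _; apply: mulr_ge0; [apply: mulr_ge0|]; apply: ltW.
have hbM : sb <= M * sa.
  rewrite /sa mulr_sumr /sb; apply: ler_sum => i _.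
  rewrite [M * _]mulrC; apply: ler_wpM2l; last exact: hm.
  by apply: mulr_ge0; apply: ltW.
have [h3|h3] := lerP (sa+sa+sa) 1.
  have -> : w = (sa*sa*sa + sa*sa*sa) + sb * (1 - (sa+sa+sa)) by rewrite /w; rring.
  apply: ltr_wpDr.
    by apply: mulr_ge0 => //; rewrite subr_ge0.
  by apply: addr_gt0; apply: mulr_gt0 => //; apply: mulr_gt0.
set t := sa+sa+sa - 1.
have ht : 0 < t by rewrite /t subr_gt0.
have h4 : 0 < (1 - sa)*(1-sa)*(sa+sa+sa+sa-1).
  apply: mulr_gt0; first by apply: mulr_gt0; rewrite subr_gt0.
  have -> : sa+sa+sa+sa-1 = t + sa by rewrite /t; rring.
  exact: addr_gt0.
have hx0 : 0 < sa*sa + sa*sa by apply: addr_gt0; apply: mulr_gt0.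
have hy0 : 0 <= M * t by apply: mulr_ge0; apply: ltW.
have hxy : 0 < (sa*sa + sa*sa - M*t) * ((sa*sa + sa*sa) + M*t).
  have -> : (sa*sa + sa*sa - M*t) * ((sa*sa + sa*sa) + M*t)
     = sa * ((1 - sa)*(1-sa)*(sa+sa+sa+sa-1)) + t*t*(sa - M*M) by rewrite /t; rring.
  apply: ltr_wpDr; first by apply: mulr_ge0; [apply: mulr_ge0; apply: ltW|rewrite subr_ge0].
  exact: mulr_gt0.
have hx : 0 < sa*sa + sa*sa - M*t.
  have hs' : 0 < (sa*sa + sa*sa) + M*t := ltr_wpDr hy0 hx0.
  by move: hxy; rewrite pmulr_lgt0.
have -> : w = sa * (sa*sa + sa*sa - M*t) + t * (M*sa - sb) by rewrite /w /t; rring.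
apply: ltr_wpDr; last exact: mulr_gt0.
by apply: mulr_ge0; [apply: ltW|rewrite subr_ge0].
Qed.

End Main.

Theorem corollary2 (R : rcfType) (Q : nat) (pi : 'I_Q -> R)
    (alpha beta alpha' beta' : R) :
  (2 <= Q)%N ->
  proportions pi ->
  0 <= alpha <= 1 -> 0 <= beta <= 1 ->
  0 <= alpha' <= 1 -> 0 <= beta' <= 1 ->
  (forall x12 x13 x23 : bool,
     affil_K3_law pi alpha beta x12 x13 x23
     = affil_K3_law pi alpha' beta' x12 x13 x23) ->
  (alpha, beta) = (alpha', beta').
Proof.
move=> hQ [hp hs] _ _ _ _ hlaw.
have hQ0 : (0 < Q)%N by apply: leq_trans hQ.
have h1 := @L1 R Q pi hs alpha beta; rewrite !hlaw (@L1 R Q pi hs) in h1.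
have h2 := @L2 R Q pi hs alpha beta; rewrite !hlaw (@L2 R Q pi hs) in h2.
have h3 := @L3 R Q pi hs alpha beta; rewrite !hlaw (@L3 R Q pi hs) in h3.
have k := @key R Q pi beta (alpha - beta).
have k' := @key R Q pi beta' (alpha' - beta').
rewrite /= h1 h2 h3 in k'.
rewrite k in k'.
have hw := @wpos R Q pi hs hQ0 hp.
have hd : alpha - beta = alpha' - beta'.
  apply: cube_inj; apply: (mulIf (lt0r_neq0 hw)); by rewrite k'.
rewrite hd in h1; move/addIr: h1 => hb.
have ha : alpha = alpha' by rewrite -(subrK beta alpha) -(subrK beta' alpha') hd hb.
by rewrite ha hb.
Qed.
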